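(* Let $k\geq 2$. Then $(\psi_k,\mathbf{d}_k)$ is a $2$-dimensional catalytic embedding from the set of unitary matrices with entries in $\mathcal{R}_{3\cdot 2^k}$ to the set of unitary matrices with entries in $\mathcal{R}_{3\cdot 2^{k-1}}$.
   Context: $\zeta_n=e^{2\pi i/n}$ and $\mathcal{R}_n$ is the smallest subring of $\mathbb{C}$ containing $1/2$ and $\zeta_n$. Every matrix $M$ with entries in $\mathcal{R}_{3\cdot 2^k}$ can be uniquely written as $M=A+B\zeta_{3\cdot2^k}$ with $A,B$ matrices over $\mathcal{R}_{3\cdot 2^{k-1}}$; define $\psi_k(M)=A\otimes I_2+B\otimes\Gamma_k$ with $\Gamma_k=\begin{bmatrix}0&1\\ \zeta_{3\cdot 2^{k-1}}&0\end{bmatrix}$, and $\mathbf{d}_k=\frac{1}{\sqrt2}\begin{bmatrix}1\\ \zeta_{3\cdot2^k}\end{bmatrix}$. For sets of unitary matrices $\mathcal{U},\mathcal{V}$, an $m$-dimensional catalytic embedding from $\mathcal{U}$ into $\mathcal{V}$ is a pair $(\phi,\mathbf{c})$ with $\phi:\mathcal{U}\to\mathcal{V}$ a function and $\mathbf{c}\in\mathbb{C}^m$ a unit vector such that (1) if $U\in\mathcal{U}$ has dimension $d$ then $\phi(U)$ has dimension $md$, and (2) $\phi(U)(\mathbf{u}\otimes\mathbf{c})=(U\mathbf{u})\otimes\mathbf{c}$ for all $\mathbf{u}\in\mathbb{C}^d$. *)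

(* Defs.v *)
From HB Require Import structures.
From mathcomp Require Import all_boot all_order all_algebra.
From mathcomp Require Import complex mxtens.
From mathcomp Require Import reals trigo.
From Stdlib Require Import ClassicalEpsilon.

Set Implicit Arguments.
Unset Strict Implicit.
Unset Printing Implicit Defensive.

Import Order.TTheory GRing.Theory Num.Theory.
Local Open Scope ring_scope.

Section Defs.
Variable R : realType.
Local Notation C := R[i].

Definition zeta (n : nat) : C :=
  Complex (cos (2 * pi / n%:R)) (sin (2 * pi / n%:R)).

(* x \in R_n : x lies in every subring of C containing 1/2 and zeta_n,
   i.e. in the smallest such subring. *)
Definition in_Rn (n : nat) (x : C) : Prop :=
  forall S : {pred C}, subring_closed S -> 2^-1 \in S -> zeta n \in S -> x \in S.

Definition mx_over (n : nat) {p q : nat} (M : 'M[C]_(p, q)) : Prop :=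
  forall i j, in_Rn n (M i j).

Definition adjmx {p q : nat} (M : 'M[C]_(p, q)) : 'M[C]_(q, p) :=
  (map_mx (fun x : C => x^*) M)^T.

Definition unitary {d : nat} (M : 'M[C]_d) : Prop :=
  M *m adjmx M = 1%:M /\ adjmx M *m M = 1%:M.

Definition unit_vector {m : nat} (c : 'cV[C]_m) : Prop :=
  \sum_(i < m) `|c i 0| ^+ 2 = 1.

(* m-dimensional catalytic embedding (phi, c) from the family U into V:
   U, V are sets of unitary matrices of every dimension d (given as
   predicates indexed by d); phi maps a d-dimensional matrix to an
   (m*d)-dimensional one (the index d*m with the Kronecker convention
   'M_d (x) 'M_m). *)
Definition catalytic_embedding (m : nat)
    (U V : forall d : nat, 'M[C]_d -> Prop)
    (phi : forall d : nat, 'M[C]_d -> 'M[C]_(d * m)) (c : 'cV[C]_m) : Prop :=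
  unit_vector c /\
  forall (d : nat) (M : 'M[C]_d), U d M ->
    V (d * m)%N (phi d M) /\
    forall u : 'cV[C]_d, phi d M *m (u *t c) = (M *m u) *t c.

(* the unique decomposition M = A + B zeta_{3 2^k} with A, B over R_{3 2^(k-1)}
   (chosen by Hilbert's epsilon; any default if no decomposition exists) *)
Definition decomp (k : nat) {d : nat} (M : 'M[C]_d) : 'M[C]_d * 'M[C]_d :=
  epsilon (inhabits (0, 0))
    (fun AB : 'M[C]_d * 'M[C]_d =>
       [/\ mx_over (3 * 2 ^ (k - 1)) AB.1, mx_over (3 * 2 ^ (k - 1)) AB.2
         & M = AB.1 + zeta (3 * 2 ^ k) *: AB.2]).

Definition Gamma (k : nat) : 'M[C]_2 :=
  \matrix_(i < 2, j < 2)
    (if ((i : nat) == 0%N) && ((j : nat) == 1%N) then 1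
     else if ((i : nat) == 1%N) && ((j : nat) == 0%N) then zeta (3 * 2 ^ (k - 1))
     else 0).

Definition psi (k : nat) (d : nat) (M : 'M[C]_d) : 'M[C]_(d * 2) :=
  (decomp k M).1 *t (1%:M : 'M[C]_2) + (decomp k M).2 *t Gamma k.

Definition dvec (k : nat) : 'cV[C]_2 :=
  (sqrtC 2)^-1 *: \col_(i < 2) (if (i : nat) == 0%N then 1 else zeta (3 * 2 ^ k)).

Definition unitaries_over (n : nat) (d : nat) (M : 'M[C]_d) : Prop :=
  unitary M /\ mx_over n M.

End Defs.

Arguments catalytic_embedding {R} m U V phi c.

(* Main.v *)
Require Import Defs.
From HB Require Import structures.
From mathcomp Require Import all_boot all_order all_algebra.
From mathcomp Require Import complex mxtens.
From mathcomp Require Import reals trigo.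
From mathcomp Require Import algC cyclotomic boolp.
From mathcomp Require Import zify ring lra.
Import Order.TTheory GRing.Theory Num.Theory.
Local Open Scope ring_scope.

Lemma root_prodP (F : idomainType) (I : eqType) (s : seq I) (G : I -> {poly F}) w :
  root (\prod_(e <- s) G e) w = has (fun e => root (G e) w) s.
Proof.
elim: s => [|a s IH]; first by rewrite big_nil /root hornerE oner_eq0.
by rewrite big_cons rootM IH.
Qed.

Lemma prim_root_Phi (F : fieldType) n (w : F) :
  n.-primitive_root w -> root (map_poly intr 'Phi_n) w.
Proof.
move=> pw; have n_gt0 := prim_order_gt0 pw.
have hX : forall d, (0 < d)%N ->
    map_poly (intr : int -> F) (\prod_(e <- divisors d) 'Phi_e) = 'X^d - 1.
  move=> d d0; rewrite prod_Cyclotomic // rmorphB rmorph1 /= map_polyXn //.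
have : root (map_poly (intr : int -> F) (\prod_(e <- divisors n) 'Phi_e)) w.
  by rewrite hX // /root !hornerE prim_expr_order // subrr.
rewrite rmorph_prod root_prodP => /hasP [d]; rewrite -dvdn_divisors // => dn rd.
have [<-//|dnn] := eqVneq d n.
have d0 : (0 < d)%N by apply: dvdn_gt0 dn.
have : root (map_poly (intr : int -> F) (\prod_(e <- divisors d) 'Phi_e)) w.
  rewrite rmorph_prod root_prodP.
  by apply/hasP; exists d; rewrite ?rd // -dvdn_divisors.
rewrite hX // /root !hornerE subr_eq0 -(prim_order_dvd pw) => /(dvdn_leq d0) ndn.
by rewrite eqn_leq ndn andbT (dvdn_leq n_gt0 dn) in dnn.
Qed.


Lemma Phi_dvd (F : numFieldType) n (w : F) (P : {poly rat}) :
  n.-primitive_root w -> root (map_poly ratr P) w ->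
  map_poly (intr : int -> rat) 'Phi_n %| P.
Proof.
move=> pw hP; have n_gt0 := prim_order_gt0 pw.
set Phi := map_poly (intr : int -> rat) 'Phi_n.
have mapPhi : forall K : numFieldType,
    map_poly (ratr : rat -> K) Phi = map_poly intr 'Phi_n.
  move=> K; rewrite -map_poly_comp; apply: eq_map_poly => a /=; exact: ratr_int.
have Phi0 : Phi != 0.
  apply/eqP => hP0; have := congr1 (fun p : {poly rat} => size p) hP0.
  rewrite /= size_poly0 size_map_inj_poly //; [by rewrite size_Cyclotomic | exact: intr_inj].
set g := gcdp P Phi.
have rg : root (map_poly ratr g) w.
  by rewrite gcdp_map root_gcd hP mapPhi prim_root_Phi.
have g0 : g != 0 by rewrite gcdp_eq0 negb_and Phi0 orbT.
have sg : (1 < size g)%N.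
  rewrite -(size_map_poly (ratr : {rmorphism rat -> F})).
  by apply: root_size_gt1 rg; rewrite map_poly_eq0.
have [z pz] := C_prim_root_exists n_gt0.
have [p [Dp mp] hp] := minCpolyP z.
have pPhi : p = Phi.
  apply: (@map_poly_inj _ _ (ratr : {rmorphism rat -> algC})).
  by rewrite -Dp (minCpoly_cyclotomic pz) -(Cintr_Cyclotomic pz) mapPhi.
have /dvdpP [h Dh] : g %| Phi := dvdp_gcdr P Phi.
have hr : root (map_poly (ratr : rat -> algC) (h * g)) z.
  by rewrite -Dh -pPhi -Dp root_minCpoly.
move: hr; rewrite rmorphM rootM => /orP [rh | rg'].
  rewrite hp pPhi in rh.
  have h0 : h != 0 by apply: contraNneq Phi0 => h0; rewrite Dh h0 mul0r.
  have := dvdp_leq h0 rh; rewrite Dh size_mul // => hle; exfalso; move: hle sg; set a := size h; set b := size g; rewrite -subn1; lia.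
rewrite hp pPhi in rg'; exact: dvdp_trans rg' (dvdp_gcdl P Phi).
Qed.

Section Trig.
Variable R : realType.
Local Notation C := R[i].

Lemma mulCE (a b c d : R) :
  (Complex a b) * (Complex c d) = Complex (a*c - b*d) (a*d + b*c) :> C.
Proof. by []. Qed.

Lemma zeta_exp n j : (zeta R n) ^+ j =
  Complex (cos (j%:R * (2 * pi / n%:R))) (sin (j%:R * (2 * pi / n%:R))).
Proof.
elim: j => [|j IH]; first by rewrite expr0 !mul0r cos0 sin0.
rewrite exprS IH /zeta /=.
set a := 2 * pi / n%:R.
have -> : j.+1%:R * a = a + j%:R * a by rewrite -addn1 natrD mulrDl mul1r addrC.
by rewrite cosD sinD mulCE [sin a * _ + _]addrC.
Qed.
End Trig.
Section Trig2.
Variable R : realType.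
Local Notation C := R[i].

Lemma zeta_n n : (0 < n)%N -> (zeta R n) ^+ n = 1.
Proof.
move=> n0; rewrite zeta_exp.
have -> : n%:R * (2 * pi / n%:R) = pi *+ 2 :> R.
  rewrite mulr2n; field; by rewrite pnatr_eq0 -lt0n.
by rewrite cos2pi sin2pi.
Qed.

Lemma sin_neq0 (x : R) : 0 < x < pi *+ 2 -> x != pi -> sin x != 0.
Proof.
move=> /andP [x0 x2] xpi.
case: (ltrgtP x pi) => hx.
- by rewrite gt_eqF // sin_gt0_pi // x0 hx.
- have -> : x = (x - pi) + pi by rewrite subrK.
  rewrite sinDpi oppr_eq0 gt_eqF // sin_gt0_pi //.
  by rewrite subr_gt0 hx /= ltrBlDr -mulr2n.
- by rewrite hx eqxx in xpi.
Qed.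

Lemma zeta_ne1 n j : (0 < j < n)%N -> (zeta R n) ^+ j != 1.
Proof.
move=> /andP [j0 jn]; have n0 : (0 < n)%N by apply: ltn_trans jn.
rewrite zeta_exp.
set x := j%:R * (2 * pi / n%:R).
have hx : x = pi *+ 2 * (j%:R / n%:R).
  rewrite /x mulr2n; field; by rewrite pnatr_eq0 -lt0n.
have pi0 := pi_gt0 R.
have jn' : j%:R / n%:R < 1 :> R by rewrite ltr_pdivrMr ?ltr0n // mul1r ltr_nat.
have jn0 : 0 < j%:R / n%:R :> R by rewrite divr_gt0 ?ltr0n.
have x0 : 0 < x by rewrite hx mulr_gt0 // mulrn_wgt0.
have x2 : x < pi *+ 2.
  by rewrite hx -[X in _ < X]mulr1 ltr_pM2l // mulrn_wgt0.
case: (eqVneq x pi) => [xpi | xpi].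
  apply/eqP => /(congr1 (fun z : C => let: Complex a _ := z in a)) /=; rewrite xpi cospi => h.
  have : (-1 : R) = 1 by rewrite h.
  by move/eqP; rewrite eq_sym -subr_eq0 opprK -mulr2n mulrn_eq0 oner_eq0.
apply/eqP => /(congr1 (fun z : C => let: Complex _ b := z in b)) /= h.
have : 0 < x < pi *+ 2 by rewrite x0 x2.
by move=> /sin_neq0 /(_ xpi); rewrite h eqxx.
Qed.
End Trig2.
Section Trig3.
Variable R : realType.
Local Notation C := R[i].

Lemma zeta_prim n : (0 < n)%N -> n.-primitive_root (zeta R n).
Proof.
move=> n0; have [m pm mn] := prim_order_exists n0 (@zeta_n R n n0).
have m0 := prim_order_gt0 pm.
have [mn'|] := ltnP m n.
  by have := @zeta_ne1 R n m; rewrite m0 mn' prim_expr_order // eqxx => /(_ isT).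
move=> nm; have := dvdn_leq n0 mn => mn2.
have e : m = n by apply/eqP; rewrite eqn_leq nm mn2.
by rewrite -[X in X.-primitive_root _]e.
Qed.

Lemma zeta_sq n : (0 < n)%N -> zeta R n = (zeta R (2 * n)) ^+ 2.
Proof.
move=> n0; rewrite zeta_exp /zeta natrM.
have -> : 2%:R * (2 * pi / (2%:R * n%:R)) = 2 * pi / n%:R :> R.
  field; by rewrite pnatr_eq0 -lt0n.
by [].
Qed.

Lemma zeta_conj n : zeta R n * (zeta R n)^* = 1.
Proof.
rewrite /zeta.
have -> : forall a b : R, (Complex a b)^* = Complex a (- b) by [].
rewrite mulCE mulrN opprK -!expr2 cos2Dsin2 mulrN mulrC addNr.
by [].
Qed.
End Trig3.

Section Rn.
Variable R : realType.
Local Notation C := R[i].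

Lemma inRn_closed (n : nat) : forall (S : {pred C}), subring_closed S -> 2^-1 \in S ->
  zeta R n \in S -> forall x, in_Rn n x -> x \in S.
Proof. by move=> S hS h2 hz x hx; apply: hx. Qed.

Lemma ratr_half : ratr (2^-1 : rat) = (2^-1 : C).
Proof. by rewrite fmorphV rmorph_nat. Qed.

Lemma inRn_1 n : in_Rn n (1 : C).
Proof. by move=> S [h1 _ _]. Qed.

Lemma inRn_B n (x y : C) : in_Rn n x -> in_Rn n y -> in_Rn n (x - y).
Proof. by move=> hx hy S hS h2 hz; case: (hS) => _ hB _; apply: hB; [apply: hx | apply: hy]. Qed.

Lemma inRn_M n (x y : C) : in_Rn n x -> in_Rn n y -> in_Rn n (x * y).
Proof. by move=> hx hy S hS h2 hz; case: (hS) => _ _ hM; apply: hM; [apply: hx | apply: hy]. Qed.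

Lemma inRn_0 n : in_Rn n (0 : C).
Proof. by rewrite -(subrr 1); apply: inRn_B; apply: inRn_1. Qed.

Lemma inRn_N n (x : C) : in_Rn n x -> in_Rn n (- x).
Proof. by move=> hx; rewrite -sub0r; apply: inRn_B => //; apply: inRn_0. Qed.

Lemma inRn_D n (x y : C) : in_Rn n x -> in_Rn n y -> in_Rn n (x + y).
Proof. by move=> hx hy; rewrite -[y]opprK; apply: inRn_B => //; apply: inRn_N. Qed.

Lemma inRn_X n (x : C) j : in_Rn n x -> in_Rn n (x ^+ j).
Proof.
move=> hx; elim: j => [|j IH]; first by rewrite expr0; apply: inRn_1.
by rewrite exprS; apply: inRn_M.
Qed.

Lemma inRn_half n : in_Rn n (2^-1 : C).
Proof. by move=> S. Qed.

Lemma inRn_zeta n : in_Rn n (zeta R n).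
Proof. by move=> S. Qed.

Lemma inRn_sum n (I : Type) (r : seq I) (P : pred I) (F : I -> C) :
  (forall i, P i -> in_Rn n (F i)) -> in_Rn n (\sum_(i <- r | P i) F i).
Proof.
move=> hF; apply: (big_ind (in_Rn n)) => //; first exact: inRn_0.
exact: inRn_D.
Qed.

Lemma inRn_subring n : subring_closed (fun x : C => `[< in_Rn n x >]).
Proof.
split.
- by apply/asboolP; apply: inRn_1.
- by move=> x y /asboolP hx /asboolP hy; apply/asboolP; apply: inRn_B.
- by move=> x y /asboolP hx /asboolP hy; apply/asboolP; apply: inRn_M.
Qed.

Lemma inRn_conj n (x : C) : (0 < n)%N -> in_Rn n x -> in_Rn n x^*.
Proof.
move=> n0 hx.
pose S := (fun y : C => `[< in_Rn n y^* >]).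
have hS : subring_closed S.
  split.
  - by apply/asboolP; rewrite rmorph1; apply: inRn_1.
  - by move=> u v /asboolP hu /asboolP hv; apply/asboolP; rewrite rmorphB; apply: inRn_B.
  - by move=> u v /asboolP hu /asboolP hv; apply/asboolP; rewrite rmorphM; apply: inRn_M.
have := hx S hS; rewrite /S => h; apply/asboolP; apply: h.
  by apply/asboolP; rewrite fmorphV /= conjC_nat; apply: inRn_half.
apply/asboolP.
have -> : (zeta R n)^* = (zeta R n) ^+ n.-1.
  have := zeta_conj R n => h1.
  have h2 : zeta R n * zeta R n ^+ n.-1 = 1 by rewrite -exprS prednK // zeta_n.
  by rewrite -[LHS]mulr1 -h2 mulrA [_^* * _]mulrC h1 mul1r.
by apply: inRn_X; apply: inRn_zeta.
Qed.
End Rn.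

Section Key.
Variable R : realType.
Local Notation C := R[i].
Variable k : nat.
Hypothesis hk : (2 <= k)%N.
Local Notation n := (3 * 2 ^ k)%N.
Local Notation m := (3 * 2 ^ (k - 1))%N.
Local Notation ze := (zeta R n).
Local Notation om := (zeta R m).

Lemma n_2m : n = (2 * m)%N.
Proof. by case: k hk => [|k'] // _; rewrite subn1 /= expnS mulnCA. Qed.

Lemma m_gt0 : (0 < m)%N.
Proof. by rewrite muln_gt0 expn_gt0. Qed.

Lemma n_gt0 : (0 < n)%N.
Proof. by rewrite muln_gt0 expn_gt0. Qed.

Lemma om_sq : om = ze ^+ 2.
Proof. by rewrite n_2m; apply: zeta_sq; apply: m_gt0. Qed.

Lemma ze_prim : n.-primitive_root ze.
Proof. exact: zeta_prim n_gt0. Qed.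

Lemma ze_m : ze ^+ m = -1.
Proof.
have h1 : (ze ^+ m) ^+ 2 = 1 by rewrite -exprM [(_ * 2)%N]mulnC -n_2m zeta_n // n_gt0.
have h2 : ze ^+ m != 1.
  apply: zeta_ne1; rewrite n_2m; have := m_gt0; set t := m; lia.
by move/eqP: h1; rewrite sqrf_eq1 (negbTE h2) /= => /eqP.
Qed.

Lemma Nze_prim : n.-primitive_root (- ze).
Proof.
have -> : - ze = ze ^+ (m + 1).
  by rewrite exprD ze_m expr1 mulN1r.
rewrite prim_root_exp_coprime; last exact: ze_prim.
rewrite coprimeMr; apply/andP; split.
  by rewrite -coprime_modl mulnC modnMDl.
rewrite coprime_pexpr ?(leq_trans _ hk) // coprimen2 oddD oddM oddX /=.
by case: k hk => [|[|k']].
Qed.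

Lemma repr_m (x : C) : in_Rn m x ->
  exists p : {poly rat}, (map_poly ratr p).[ze] = x /\ (map_poly ratr p).[- ze] = x.
Proof.
move=> hx.
pose S := fun y : C => `[< exists p : {poly rat},
   (map_poly ratr p).[ze] = y /\ (map_poly ratr p).[- ze] = y >].
have hS : subring_closed S.
  split.
  - by apply/asboolP; exists 1; rewrite rmorph1 !hornerC.
  - move=> u v /asboolP [p [hp1 hp2]] /asboolP [q [hq1 hq2]]; apply/asboolP.
    by exists (p - q); rewrite rmorphB !hornerD !hornerN hp1 hp2 hq1 hq2.
  - move=> u v /asboolP [p [hp1 hp2]] /asboolP [q [hq1 hq2]]; apply/asboolP.
    by exists (p * q); rewrite rmorphM !hornerM hp1 hp2 hq1 hq2.
have h2 : 2^-1 \in S.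
  by apply/asboolP; exists (2^-1)%:P; rewrite map_polyC !hornerC; split; exact: ratr_half.

have hz : om \in S.
  apply/asboolP; exists 'X^2; rewrite map_polyXn !hornerXn sqrrN -om_sq.
  by [].
by have /asboolP := hx S hS h2 hz.
Qed.

Lemma ze_conj : ze^* = ze * om^*.
Proof. by rewrite om_sq expr2 rmorphM mulrA zeta_conj mul1r. Qed.

Lemma mapPhi : map_poly (ratr : rat -> C) (map_poly (intr : int -> rat) 'Phi_n)
   = map_poly intr 'Phi_n.
Proof. rewrite -map_poly_comp; apply: eq_map_poly => a /=; exact: ratr_int. Qed.

Lemma uniq0 (x y : C) : in_Rn m x -> in_Rn m y -> x + ze * y = 0 -> y = 0.
Proof.
move=> /repr_m [p [hp1 hp2]] /repr_m [q [hq1 hq2]] hxy.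
pose P := p + 'X * q.
have rP : root (map_poly ratr P) ze.
  by rewrite /root rmorphD rmorphM /= map_polyX hornerD hornerM hornerX hp1 hq1 hxy.
have /dvdpP [r Dr] := @Phi_dvd _ _ _ _ ze_prim rP.
have rN : root (map_poly ratr P) (- ze).
  rewrite Dr rmorphM rootM; apply/orP; right.
  by have := @prim_root_Phi _ _ _ Nze_prim; rewrite -mapPhi.
move: rN; rewrite /root rmorphD rmorphM /= map_polyX hornerD hornerM hornerX hp2 hq2.
move=> /eqP hN.
have : (ze * y) *+ 2 = 0.
  have -> : (ze * y) *+ 2 = (x + ze * y) - (x + - ze * y) by ring.
  by rewrite hxy hN subrr.
move/eqP; rewrite mulrn_eq0 /= mulf_eq0 => /orP [hz|/eqP //].
by move: (prim_root_eq0 ze_prim) n_gt0; rewrite hz => /esym/eqP ->.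
Qed.

Lemma exists_decomp (x : C) : in_Rn n x ->
  exists a b, [/\ in_Rn m a, in_Rn m b & x = a + ze * b].
Proof.
move=> hx.
pose S := fun y : C => `[< exists a b, [/\ in_Rn m a, in_Rn m b & y = a + ze * b] >].
have hS : subring_closed S.
  split.
  - apply/asboolP; exists 1, 0; split; [exact: inRn_1 | exact: inRn_0 |].
    by rewrite mulr0 addr0.
  - move=> u v /asboolP [a [b [ha hb ->]]] /asboolP [c [d [hc hd ->]]]; apply/asboolP.
    exists (a - c), (b - d); split; [exact: inRn_B | exact: inRn_B |].
    by rewrite mulrBr opprD addrACA.
  - move=> u v /asboolP [a [b [ha hb ->]]] /asboolP [c [d [hc hd ->]]]; apply/asboolP.
    exists (a * c + om * (b * d)), (a * d + b * c); split.
    + apply: inRn_D; first exact: inRn_M.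
      by apply: inRn_M; [exact: inRn_zeta | exact: inRn_M].
    + by apply: inRn_D; apply: inRn_M.
    + rewrite om_sq; ring.
have h2 : 2^-1 \in S.
  apply/asboolP; exists 2^-1, 0; split; [exact: inRn_half | exact: inRn_0 |].
  by rewrite mulr0 addr0.
have hz : ze \in S.
  apply/asboolP; exists 0, 1; split; [exact: inRn_0 | exact: inRn_1 |].
  by rewrite mulr1 add0r.
by have /asboolP := hx S hS h2 hz.
Qed.
End Key.

Section Mx.
Variable R : realType.
Local Notation C := R[i].

Lemma tensmxDl {a b c d} (A B : 'M[C]_(a, b)) (D : 'M[C]_(c, d)) :
  (A + B) *t D = A *t D + B *t D.
Proof. by apply/matrixP => i j; rewrite !mxE mulrDl. Qed.

Lemma tensmxZl {a b c d} (x : C) (A : 'M[C]_(a, b)) (D : 'M[C]_(c, d)) :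
  (x *: A) *t D = x *: (A *t D).
Proof. by apply/matrixP => i j; rewrite !mxE mulrA. Qed.

Lemma tensmxZr {a b c d} (x : C) (A : 'M[C]_(a, b)) (D : 'M[C]_(c, d)) :
  A *t (x *: D) = x *: (A *t D).
Proof. by apply/matrixP => i j; rewrite !mxE mulrCA. Qed.

Lemma adjmx_tens {a b c d} (A : 'M[C]_(a, b)) (D : 'M[C]_(c, d)) :
  adjmx (A *t D) = adjmx A *t adjmx D.
Proof. by apply/matrixP => i j; rewrite /adjmx !mxE rmorphM. Qed.

Lemma adjmxD {a b} (A B : 'M[C]_(a, b)) : adjmx (A + B) = adjmx A + adjmx B.
Proof. by apply/matrixP => i j; rewrite /adjmx !mxE rmorphD. Qed.

Lemma adjmxZ {a b} (x : C) (A : 'M[C]_(a, b)) : adjmx (x *: A) = x^* *: adjmx A.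
Proof. by apply/matrixP => i j; rewrite /adjmx !mxE rmorphM. Qed.

Lemma adjmx1 {a} : adjmx (1%:M : 'M[C]_a) = 1%:M.
Proof. by apply/matrixP => i j; rewrite /adjmx !mxE eq_sym rmorph_nat. Qed.

Lemma adjmxM {a b c} (A : 'M[C]_(a, b)) (B : 'M[C]_(b, c)) :
  adjmx (A *m B) = adjmx B *m adjmx A.
Proof.
apply/matrixP => i j; rewrite /adjmx !mxE rmorph_sum; apply: eq_bigr => l _.
by rewrite !mxE rmorphM mulrC.
Qed.

Lemma tens11 {a b} : (1%:M : 'M[C]_a) *t (1%:M : 'M[C]_b) = 1%:M.
Proof.
apply/matrixP => i j.
case: (mxtens_indexP i) => i0 i1; case: (mxtens_indexP j) => j0 j1.
rewrite tensmxE !mxE (can_eq (@mxtens_indexK _ _)) xpair_eqE.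
by case: (i0 == j0); case: (i1 == j1); rewrite ?mulr1 ?mulr0 ?mul0r.
Qed.

Lemma mx_over_D n {a b} (A B : 'M[C]_(a, b)) :
  mx_over n A -> mx_over n B -> mx_over n (A + B).
Proof. by move=> hA hB i j; rewrite mxE; apply: inRn_D. Qed.

Lemma mx_over_B n {a b} (A B : 'M[C]_(a, b)) :
  mx_over n A -> mx_over n B -> mx_over n (A - B).
Proof. by move=> hA hB i j; rewrite !mxE; apply: inRn_B. Qed.

Lemma mx_over_M n {a b c} (A : 'M[C]_(a, b)) (B : 'M[C]_(b, c)) :
  mx_over n A -> mx_over n B -> mx_over n (A *m B).
Proof. by move=> hA hB i j; rewrite mxE; apply: inRn_sum => l _; apply: inRn_M. Qed.

Lemma mx_over_Z n {a b} (x : C) (A : 'M[C]_(a, b)) :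
  in_Rn n x -> mx_over n A -> mx_over n (x *: A).
Proof. by move=> hx hA i j; rewrite mxE; apply: inRn_M. Qed.

Lemma mx_over_adj n {a b} (A : 'M[C]_(a, b)) :
  (0 < n)%N -> mx_over n A -> mx_over n (adjmx A).
Proof. by move=> n0 hA i j; rewrite /adjmx !mxE; apply: inRn_conj. Qed.

Lemma mx_over_1 n {a} : mx_over n (1%:M : 'M[C]_a).
Proof. by move=> i j; rewrite mxE; case: (i == j); [apply: inRn_1 | apply: inRn_0]. Qed.

Lemma mx_over_tens n {a b c d} (A : 'M[C]_(a, b)) (D : 'M[C]_(c, d)) :
  mx_over n A -> mx_over n D -> mx_over n (A *t D).
Proof. by move=> hA hD i j; rewrite mxE; apply: inRn_M. Qed.
End Mx.

Section Main.
Variable R : realType.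
Local Notation C := R[i].
Variable k : nat.
Hypothesis hk : (2 <= k)%N.
Local Notation n := (3 * 2 ^ k)%N.
Local Notation m := (3 * 2 ^ (k - 1))%N.
Local Notation ze := (zeta R n).
Local Notation om := (zeta R m).
Local Notation G := (Gamma R k).

Lemma sum2 (F : 'I_2 -> C) : \sum_(l < 2) F l = F ord0 + F ord_max.
Proof. by rewrite big_ord_recr big_ord1; congr (F _ + _); apply: val_inj. Qed.

Lemma Gamma_sq : G *m G = om *: 1%:M.
Proof.
apply/matrixP => i j; rewrite !mxE sum2 !mxE /=.
case: i => [[|[|i]]] // ?; case: j => [[|[|j]]] // ? /=;
  rewrite ?mulr0 ?mul0r ?mulr1 ?mul1r ?addr0 ?add0r //.
Qed.

Lemma Gamma_adj : adjmx G = om^* *: G.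
Proof.
apply/matrixP => i j; rewrite /adjmx !mxE /=.
case: i => [[|[|i]]] // ?; case: j => [[|[|j]]] // ? /=;
  rewrite ?rmorph0 ?rmorph1 ?mulr0 ?mulr1 //.
by rewrite mulrC zeta_conj.
Qed.

Lemma Gamma_dvec : G *m dvec R k = ze *: dvec R k.
Proof.
apply/matrixP => i j; rewrite !mxE sum2 !mxE /=.
case: i => [[|[|i]]] // ? /=; rewrite ?mul0r ?add0r ?addr0 ?mul1r.
  by rewrite mulr1 mulrC.
by rewrite mulr1 mulrCA -expr2 -om_sq // mulrC.
Qed.

Definition L {d} (A B : 'M[C]_d) : 'M[C]_(d * 2) := A *t 1%:M + B *t G.

Lemma L_mul d (A B A' B' : 'M[C]_d) :
  L A B *m L A' B' = L (A *m A' + om *: (B *m B')) (A *m B' + B *m A').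
Proof.
rewrite /L mulmxDl !mulmxDr !tensmx_mul !mul1mx !mulmx1 Gamma_sq !tensmxDl tensmxZl tensmxZr.
by rewrite [_ *t G + om *: _]addrC addrACA.
Qed.

Lemma L_adj d (A B : 'M[C]_d) : adjmx (L A B) = L (adjmx A) (om^* *: adjmx B).
Proof. by rewrite /L adjmxD !adjmx_tens adjmx1 Gamma_adj tensmxZr tensmxZl. Qed.

Lemma mx_expand d (A B A' B' : 'M[C]_d) :
  (A + ze *: B) *m (A' + ze *: B') = (A *m A' + om *: (B *m B')) + ze *: (A *m B' + B *m A').
Proof.
rewrite mulmxDl !mulmxDr -!scalemxAl -!scalemxAr scalerA -expr2 -om_sq //.
by rewrite scalerDr [ze *: (B *m A') + _]addrC addrACA.
Qed.

Lemma adj_expand d (A B : 'M[C]_d) :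
  adjmx (A + ze *: B) = adjmx A + ze *: (om^* *: adjmx B).
Proof.
by rewrite adjmxD adjmxZ scalerA ze_conj.
Qed.

Lemma mx_uniq d (X Y X' Y' : 'M[C]_d) :
  mx_over m X -> mx_over m Y -> mx_over m X' -> mx_over m Y' ->
  X + ze *: Y = X' + ze *: Y' -> X = X' /\ Y = Y'.
Proof.
move=> hX hY hX' hY' e.
have hY0 : Y = Y'.
  apply/matrixP => i j; apply/eqP; rewrite -subr_eq0; apply/eqP.
  have := @uniq0 R k hk ((X - X') i j) ((Y - Y') i j) (@mx_over_B R m d d X X' hX hX' i j) (@mx_over_B R m d d Y Y' hY hY' i j).
  rewrite !mxE; apply.
  have := congr1 (fun M : 'M[C]_d => M i j) e; rewrite /= !mxE => e'.
  by rewrite mulrBr addrACA -opprD e' subrr.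
split => //; move: e; rewrite hY0 => /addIr //.
Qed.

End Main.

From Stdlib Require Import ClassicalEpsilon.

Lemma mx_over_0 (R : realType) n {a b} : mx_over n (0 : 'M[R[i]]_(a, b)).
Proof. by move=> i j; rewrite mxE; apply: inRn_0. Qed.

Theorem proposition5p4 (R : realType) (k : nat) (hk : (2 <= k)%N) :
  catalytic_embedding 2%N
    (@unitaries_over R (3 * 2 ^ k)) (@unitaries_over R (3 * 2 ^ (k - 1)))
    (@psi R k) (@dvec R k).
Proof.
set n := (3 * 2 ^ k)%N; set m := (3 * 2 ^ (k - 1))%N.
set ze := zeta R n; set om := zeta R m.
split.
  rewrite /unit_vector sum2 /dvec !mxE /= mulr1 normrM exprMn.
  have hz : `|ze| ^+ 2 = 1 by rewrite normCK zeta_conj.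
  rewrite hz mulr1 normfV ger0_norm ?sqrtC_ge0 ?ler0n // exprVn sqrtCK.
  have h2 : (2 : R[i]) != 0 by rewrite pnatr_eq0.
  by apply: (mulfI h2); rewrite mulrDr mulfV // mulr1.
move=> d M [[hU1 hU2] hM].
have hex : exists AB : 'M[R[i]]_d * 'M[R[i]]_d,
    [/\ mx_over m AB.1, mx_over m AB.2 & M = AB.1 + ze *: AB.2].
  pose P (i j : 'I_d) := fun ab : R[i] * R[i] =>
    [/\ in_Rn m ab.1, in_Rn m ab.2 & M i j = ab.1 + ze * ab.2].
  have hP : forall i j, P i j (epsilon (inhabits (0, 0)) (P i j)).
    move=> i j; apply: epsilon_spec.
    by have [a [b h]] := @exists_decomp R k hk _ (hM i j); exists (a, b).
  exists (\matrix_(i, j) (epsilon (inhabits (0, 0)) (P i j)).1,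
          \matrix_(i, j) (epsilon (inhabits (0, 0)) (P i j)).2); split => /=.
  - by move=> i j; rewrite mxE; case: (hP i j).
  - by move=> i j; rewrite mxE; case: (hP i j).
  - by apply/matrixP => i j; rewrite !mxE; case: (hP i j).
have [hA hB hMAB] : [/\ mx_over m (decomp k M).1, mx_over m (decomp k M).2
    & M = (decomp k M).1 + ze *: (decomp k M).2] := epsilon_spec _ _ hex.
set A := (decomp k M).1 in hA hB hMAB *; set B := (decomp k M).2 in hA hB hMAB *.
have epsi : psi k M = @L R k d A B by [].
have m0 : (0 < m)%N by rewrite muln_gt0 expn_gt0.
set A' := adjmx A; set B' := om^* *: adjmx B.
have hA' : mx_over m A' by apply: mx_over_adj.
have hB' : mx_over m B'.
  by apply: mx_over_Z; [apply: inRn_conj => //; apply: inRn_zeta | apply: mx_over_adj].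
have hadj : adjmx M = A' + ze *: B' by rewrite hMAB adj_expand.
have hG : mx_over m (Gamma R k).
  move=> i j; rewrite mxE.
  case: ifP => _; first exact: inRn_1.
  case: ifP => _; [exact: inRn_zeta | exact: inRn_0].
have e1 : forall X Y : 'M[R[i]]_d, mx_over m X -> mx_over m Y ->
    X + ze *: Y = 1%:M -> @L R k d X Y = 1%:M.
  move=> X Y hX hY e.
  have [-> ->] := @mx_uniq R k hk d _ _ _ _ hX hY (@mx_over_1 R m d) (@mx_over_0 R m d d)
    (etrans e (esym (etrans (congr1 _ (scaler0 _ _)) (addr0 _)))).
  by rewrite /L tens0mx addr0 tens11.
split; last first.
  move=> u; rewrite epsi /L mulmxDl !tensmx_mul mul1mx Gamma_dvec // (@tensmxZr R _ _ _ _ ze).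
  by rewrite -tensmxZl -tensmxDl hMAB mulmxDl -scalemxAl.
split; last first.
  by rewrite epsi /L; apply: mx_over_D; apply: mx_over_tens => //; apply: mx_over_1.
split.
  rewrite epsi L_adj L_mul; apply: e1.
  - apply: mx_over_D; first exact: mx_over_M.
    by apply: mx_over_Z; [apply: inRn_zeta | exact: mx_over_M].
  - by apply: mx_over_D; exact: mx_over_M.
  by rewrite -mx_expand // -hadj -hMAB.
rewrite epsi L_adj L_mul; apply: e1.
- apply: mx_over_D; first exact: mx_over_M.
  by apply: mx_over_Z; [apply: inRn_zeta | exact: mx_over_M].
- by apply: mx_over_D; exact: mx_over_M.
by rewrite -mx_expand // -hadj -hMAB.
Qed.
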